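(* Let $\lambda>-1/2$, $\lambda\ne0$, $M,N\ge0$ integers, $a_0,\dots,a_M\in\mathbb{R}$, and $f_M(x)=\sum_{m=0}^M a_mC^{(\lambda)}_m(x)$. For $0\le n\le N$ and $y\in[-1,1]$ write $\int_{-1}^{y}f_M(y-1-t)C^{(\lambda)}_n(t)\,\mathrm{d}t=\sum_{k=0}^{M+N+1}R^{(\lambda)}_{k,n}C^{(\lambda)}_k(y)$. Then for all integers $k,n$ with $M+1\le k,n\le N$, $$R^{(\lambda)}_{k,n}=(-1)^{k+n}\frac{k+\lambda}{n+\lambda}R^{(\lambda)}_{n,k}.$$
   Context: Gegenbauer polynomials $C^{(\lambda)}_n$ ($\lambda>-1/2$, $\lambda\ne0$) are defined by $C^{(\lambda)}_{-1}=0$, $C^{(\lambda)}_0=1$, $2(n+\lambda)xC^{(\lambda)}_n(x)=(n+1)C^{(\lambda)}_{n+1}(x)+(n+2\lambda-1)C^{(\lambda)}_{n-1}(x)$. *)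

(* Defs.v *)
From Stdlib Require Import Reals.
From Coquelicot Require Import Coquelicot.
Open Scope R_scope.

(* geg_pair lam x n = (C^{(lam)}_{n-1}(x), C^{(lam)}_n(x)), with C_{-1} = 0, C_0 = 1 and
   (m+1) C_{m+1}(x) = 2(m+lam) x C_m(x) - (m+2lam-1) C_{m-1}(x). *)
Fixpoint geg_pair (lam x : R) (n : nat) : R * R :=
  match n with
  | O => (0, 1)
  | S m => let (a, b) := geg_pair lam x m in
           (b, (2 * (INR m + lam) * x * b - (INR m + 2 * lam - 1) * a) / (INR m + 1))
  end.

Definition gegenbauer (lam : R) (n : nat) (x : R) : R := snd (geg_pair lam x n).

Definition fM (lam : R) (M : nat) (a : nat -> R) (x : R) : R :=
  sum_f_R0 (fun m => a m * gegenbauer lam m x) M.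

(* Main.v *)
Require Import Defs.
From Stdlib Require Import Reals Lra Lia Psatz FunctionalExtensionality Factorial.
From Coquelicot Require Import Coquelicot.
Open Scope R_scope.

Fixpoint sm (f : nat -> R) (n : nat) : R :=
  match n with O => 0 | S m => sm f m + f m end.

Lemma sm_ext f g n : (forall i, (i < n)%nat -> f i = g i) -> sm f n = sm g n.
Proof. induction n; simpl; intros H; auto. rewrite IHn by (intros; apply H; lia). rewrite H by lia. reflexivity. Qed.

Lemma sm_plus f g n : sm (fun i => f i + g i) n = sm f n + sm g n.
Proof. induction n; simpl; [lra|]. rewrite IHn; lra. Qed.

Lemma sm_scal c f n : sm (fun i => c * f i) n = c * sm f n.
Proof. induction n; simpl; [lra|]. rewrite IHn; lra. Qed.

Lemma sm_minus f g n : sm (fun i => f i - g i) n = sm f n - sm g n.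
Proof. induction n; simpl; [lra|]. rewrite IHn; lra. Qed.

Lemma sm_shift f n : sm f (S n) = f O + sm (fun i => f (S i)) n.
Proof. induction n; simpl in *; [lra|]. rewrite IHn; lra. Qed.

Lemma sm_zero f n : (forall i, (i < n)%nat -> f i = 0) -> sm f n = 0.
Proof. induction n; simpl; intros H; [lra|]. rewrite IHn by (intros; apply H; lia). rewrite H by lia. lra. Qed.

Lemma sm_exch (F : nat -> nat -> R) n m :
  sm (fun i => sm (fun k => F i k) m) n = sm (fun k => sm (fun i => F i k) n) m.
Proof.
  induction n; simpl.
  - symmetry. apply sm_zero. auto.
  - rewrite IHn. rewrite <- sm_plus. reflexivity.
Qed.

Lemma sum_f_R0_sm f n : sum_f_R0 f n = sm f (S n).
Proof. induction n; simpl in *; [lra|]. rewrite IHn. reflexivity. Qed.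

Lemma sm_abs f n : Rabs (sm f n) <= sm (fun i => Rabs (f i)) n.
Proof. induction n; simpl. rewrite Rabs_R0; lra.
  eapply Rle_trans. apply Rabs_triang. lra. Qed.

Lemma sm_le f g n : (forall i, (i < n)%nat -> f i <= g i) -> sm f n <= sm g n.
Proof. induction n; simpl; intros H; [lra|]. assert (f n <= g n) by (apply H; lia). assert (sm f n <= sm g n) by (apply IHn; intros; apply H; lia). lra. Qed.

Definition Pg (lam : R) (n : nat) (x : R) : R := fst (geg_pair lam x n).

Fixpoint gdp (lam x : R) (n : nat) : R * R :=
  match n with
  | O => (0, 0)
  | S m => (snd (gdp lam x m),
            (2 * (INR m + lam) * (gegenbauer lam m x + x * snd (gdp lam x m))
              - (INR m + 2 * lam - 1) * fst (gdp lam x m)) / (INR m + 1))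
  end.
Definition Dg lam n x := snd (gdp lam x n).
Definition Dpg lam n x := fst (gdp lam x n).

Lemma C_S lam m x : gegenbauer lam (S m) x =
  (2 * (INR m + lam) * x * gegenbauer lam m x - (INR m + 2 * lam - 1) * Pg lam m x) / (INR m + 1).
Proof. unfold gegenbauer, Pg; simpl. destruct (geg_pair lam x m); reflexivity. Qed.
Lemma P_S lam m x : Pg lam (S m) x = gegenbauer lam m x.
Proof. unfold gegenbauer, Pg; simpl. destruct (geg_pair lam x m); reflexivity. Qed.
Lemma C_0 lam x : gegenbauer lam 0 x = 1. Proof. reflexivity. Qed.
Lemma P_0 lam x : Pg lam 0 x = 0. Proof. reflexivity. Qed.
Lemma D_S lam m x : Dg lam (S m) x =
  (2 * (INR m + lam) * (gegenbauer lam m x + x * Dg lam m x) - (INR m + 2 * lam - 1) * Dpg lam m x) / (INR m + 1).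
Proof. reflexivity. Qed.
Lemma Dp_S lam m x : Dpg lam (S m) x = Dg lam m x. Proof. reflexivity. Qed.

Lemma INR_p1 m : INR m + 1 <> 0.
Proof. pose proof (pos_INR m). lra. Qed.

Lemma geg_derive lam n x :
  is_derive (fun x => gegenbauer lam n x) x (Dg lam n x) /\
  is_derive (fun x => Pg lam n x) x (Dpg lam n x).
Proof.
  revert x. induction n; intros x.
  - split; unfold gegenbauer, Pg, Dg, Dpg; simpl; auto_derive; auto.
  - split.
    + eapply is_derive_ext. intros t. symmetry. apply C_S.
      destruct (IHn x) as [H1 H2].
      auto_derive.
      * repeat split; try (eexists; eassumption); auto. 
      * replace (Derive (fun x : R => gegenbauer lam n x) x) with (Dg lam n x) by (symmetry; apply is_derive_unique; exact H1).
        replace (Derive (fun x : R => Pg lam n x) x) with (Dpg lam n x) by (symmetry; apply is_derive_unique; exact H2).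
        rewrite D_S. field. apply INR_p1.
    + eapply is_derive_ext. intros t. symmetry. apply P_S.
      apply IHn.
Qed.

Lemma geg_ids lam n x :
  x * Dg lam n x - Dpg lam n x = INR n * gegenbauer lam n x /\
  (x * x - 1) * Dg lam n x = INR n * x * gegenbauer lam n x - (INR n + 2 * lam - 1) * Pg lam n x.
Proof.
  induction n.
  - unfold Dg, Dpg, Pg, gegenbauer; simpl. split; ring.
  - destruct IHn as [H1 H2].
    assert (H3 : Dg lam (S n) x = x * Dg lam n x + (INR n + 2 * lam) * gegenbauer lam n x).
    { rewrite D_S. apply Rmult_eq_reg_r with (INR n + 1); [|apply INR_p1].
      unfold Rdiv. rewrite Rmult_assoc, Rinv_l by apply INR_p1.
      replace (Dpg lam n x) with (x * Dg lam n x - INR n * gegenbauer lam n x) by lra. ring. }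
    rewrite Dp_S, P_S, H3, C_S, S_INR.
    set (E := 2 * (INR n + lam) * x * gegenbauer lam n x - (INR n + 2 * lam - 1) * Pg lam n x).
    assert (HE : (INR n + 1) * (E / (INR n + 1)) = E) by (field; apply INR_p1).
    set (C := gegenbauer lam n x) in *. set (D := Dg lam n x) in *. set (P := Pg lam n x) in *.
    split.
    + rewrite HE. unfold E. replace (x * (x * D + (INR n + 2 * lam) * C) - D) with ((x*x-1)*D + (INR n + 2 * lam) * x * C) by ring.
      rewrite H2. ring.
    + replace ((INR n + 1) * x * (E / (INR n + 1))) with (x * E) by (field; apply INR_p1).
      unfold E. replace ((x * x - 1) * (x * D + (INR n + 2 * lam) * C)) with (x * ((x*x-1)*D) + (INR n + 2 * lam) * (x*x-1) * C) by ring.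
      rewrite H2. ring.
Qed.

Lemma geg_dstep lam m x :
  Dg lam (S m) x - Dpg lam m x = 2 * (INR m + lam) * gegenbauer lam m x.
Proof.
  destruct (geg_ids lam m x) as [H1 H2].
  assert (H3 : Dg lam (S m) x = x * Dg lam m x + (INR m + 2 * lam) * gegenbauer lam m x).
  { rewrite D_S. apply Rmult_eq_reg_r with (INR m + 1); [|apply INR_p1].
    unfold Rdiv. rewrite Rmult_assoc, Rinv_l by apply INR_p1.
    replace (Dpg lam m x) with (x * Dg lam m x - INR m * gegenbauer lam m x) by lra. ring. }
  rewrite H3. lra.
Qed.

Definition IsP (n : nat) (F : R -> R) : Prop :=
  exists w : nat -> R, forall x, F x = sm (fun i => w i * (x + 1) ^ i) n.

Lemma sm_ext_supp f n m : (n <= m)%nat -> (forall i, (n <= i)%nat -> (i < m)%nat -> f i = 0) -> sm f m = sm f n.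
Proof.
  intros Hnm. induction Hnm; intros H; auto.
  simpl. rewrite IHHnm by (intros; apply H; lia). rewrite H by lia. lra.
Qed.

Lemma IsP_ext n F G : (forall x, F x = G x) -> IsP n F -> IsP n G.
Proof. intros H [w Hw]. exists w. intros x. rewrite <- H. auto. Qed.

Lemma IsP_mono n m F : (n <= m)%nat -> IsP n F -> IsP m F.
Proof.
  intros Hnm [w Hw]. exists (fun i => if Nat.ltb i n then w i else 0). intros x.
  rewrite sm_ext_supp with (n := n).
  2: exact Hnm.
  2: { intros i H1 H2. destruct (Nat.ltb_spec i n). lia. ring. }
  rewrite Hw. apply sm_ext. intros i Hi. destruct (Nat.ltb_spec i n); [ring|lia].
Qed.

Lemma IsP_plus n F G : IsP n F -> IsP n G -> IsP n (fun x => F x + G x).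
Proof. intros [w Hw] [v Hv]. exists (fun i => w i + v i). intros x. rewrite Hw, Hv, <- sm_plus. apply sm_ext. intros; ring. Qed.

Lemma IsP_scal n c F : IsP n F -> IsP n (fun x => c * F x).
Proof. intros [w Hw]. exists (fun i => c * w i). intros x. rewrite Hw, <- sm_scal. apply sm_ext. intros; ring. Qed.

Lemma IsP_zero n : IsP n (fun _ => 0).
Proof. exists (fun _ => 0). intros x. symmetry. apply sm_zero. intros; ring. Qed.

Lemma IsP_monom k : IsP (S k) (fun x => (x + 1) ^ k).
Proof. exists (fun i => if Nat.eqb i k then 1 else 0). intros x. simpl.
  rewrite sm_zero. rewrite Nat.eqb_refl. ring. intros i Hi. destruct (Nat.eqb_spec i k); [lia|ring]. Qed.

Lemma IsP_const c : IsP 1 (fun _ => c).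
Proof. exists (fun _ => c). intros x. simpl. ring. Qed.

Lemma IsP_mulx1 n F : IsP n F -> IsP (S n) (fun x => (x + 1) * F x).
Proof. intros [w Hw]. exists (fun i => match i with O => 0 | S j => w j end). intros x.
  rewrite sm_shift, Hw, <- sm_scal. simpl. rewrite Rmult_0_l, Rplus_0_l. apply sm_ext. intros; ring. Qed.

Lemma IsP_mulx n F : IsP n F -> IsP (S n) (fun x => x * F x).
Proof. intros H. apply IsP_ext with (fun x => (x + 1) * F x + (-1) * F x). intros; ring.
  apply IsP_plus. apply IsP_mulx1; auto. apply IsP_scal. apply IsP_mono with n; auto. Qed.

Lemma IsP_sm n m (F : nat -> R -> R) : (forall i, (i < m)%nat -> IsP n (F i)) -> IsP n (fun x => sm (fun i => F i x) m).
Proof. induction m; intros H; simpl. apply IsP_zero. apply IsP_plus. apply IHm; auto. apply H; lia. Qed.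

Lemma pow_le1 s n : 0 <= s <= 1 -> s ^ n <= 1.
Proof. intros H. induction n; simpl. lra. assert (0 <= s ^ n) by (apply pow_le; lra). nra. Qed.

Lemma pow_zero n : forall w : nat -> R,
  (forall s, 0 < s <= 1 -> sm (fun i => w i * s ^ i) n = 0) -> forall i, (i < n)%nat -> w i = 0.
Proof.
  induction n; intros w H i Hi. lia.
  set (T := sm (fun i => Rabs (w (S i))) n).
  assert (HT : 0 <= T). { unfold T. apply Rle_trans with (sm (fun _ => 0) n). rewrite sm_zero; auto. lra.
    apply sm_le. intros; apply Rabs_pos. }
  assert (Hb : forall s, 0 < s <= 1 -> Rabs (sm (fun i => w (S i) * s ^ i) n) <= T).
  { intros s Hs. eapply Rle_trans. apply sm_abs. apply sm_le. intros j Hj. rewrite Rabs_mult.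
    rewrite <- (Rmult_1_r (Rabs (w (S j)))) at 2. apply Rmult_le_compat_l. apply Rabs_pos.
    rewrite <- RPow_abs. apply pow_le1. split. apply Rabs_pos. rewrite Rabs_right; lra. }
  assert (Hs : forall s, 0 < s <= 1 -> w O + s * sm (fun i => w (S i) * s ^ i) n = 0).
  { intros s Hs. rewrite <- (H s Hs). rewrite sm_shift. simpl. rewrite <- sm_scal. 
    replace (w 0%nat * 1) with (w 0%nat) by ring. f_equal. apply sm_ext. intros; ring. }
  assert (H0 : w O = 0).
  { destruct (Req_dec (w O) 0) as [E|E]; auto. exfalso.
    set (a := Rabs (w O)). assert (Ha : 0 < a) by (apply Rabs_pos_lt; auto).
    set (s := a / (a + T)).
    assert (Hs1 : 0 < s <= 1). { unfold s. split. apply Rdiv_lt_0_compat; lra.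
      apply Rmult_le_reg_r with (a + T). lra. unfold Rdiv. rewrite Rmult_assoc, Rinv_l by lra. lra. }
    specialize (Hb s Hs1). specialize (Hs s Hs1).
    assert (a = Rabs (s * sm (fun i => w (S i) * s ^ i) n)).
    { unfold a. replace (w O) with (- (s * sm (fun i => w (S i) * s ^ i) n)) by lra. apply Rabs_Ropp. }
    rewrite Rabs_mult, Rabs_right in H0 by lra.
    assert (a <= s * T) by (rewrite H0; apply Rmult_le_compat_l; lra).
    assert (s * T < a). { unfold s. apply Rmult_lt_reg_r with (a + T). lra.
      unfold Rdiv. replace (a * / (a + T) * T * (a + T)) with (a * T * ((a + T) * / (a+T))) by ring.
      rewrite Rinv_r by lra. nra. }
    lra. }
  destruct i. auto.
  apply (IHn (fun i => w (S i))); [|lia].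
  intros s Hs1. specialize (Hs s Hs1). rewrite H0 in Hs.
  apply Rmult_eq_reg_l with s. lra. lra.
Qed.


Section Lam.
Variable lam : R.
Hypothesis Hl1 : -1/2 < lam.
Hypothesis Hl2 : lam <> 0.

Lemma nzl n : INR n + lam <> 0.
Proof. destruct n. simpl. lra. rewrite S_INR. pose proof (pos_INR n). lra. Qed.

Lemma geg_lead k : (exists e, e <> 0 /\ IsP k (fun x => gegenbauer lam k x - e * (x + 1) ^ k)) /\ IsP k (Pg lam k).
Proof.
  induction k.
  - split. exists 1. split. lra. apply IsP_ext with (fun _ => 0). intros; unfold gegenbauer; simpl; ring. apply IsP_zero.
    apply IsP_ext with (fun _ => 0). intros; reflexivity. apply IsP_zero.
  - destruct IHk as [[e [He Hr]] HP]. split.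
    + exists (2 * (INR k + lam) * e / (INR k + 1)). split.
      { intro H0. assert (H1 : 2*(INR k+lam)*e = 0).
        { replace (2*(INR k+lam)*e) with ((2*(INR k+lam)*e/(INR k+1))*(INR k+1)) by (field; apply INR_p1). rewrite H0; ring. }
        apply Rmult_integral in H1 as [H1|H1]; [apply Rmult_integral in H1 as [H1|H1]|]; [lra|apply (nzl k); auto|auto]. }
      apply IsP_ext with (fun x => / (INR k + 1) * (2 * (INR k + lam) * (-e * (x+1)^k + x * (gegenbauer lam k x - e * (x + 1) ^ k)) + (-(INR k + 2 * lam - 1)) * Pg lam k x)).
      { intros x. rewrite C_S. simpl. field. apply INR_p1. }
      apply IsP_scal. apply IsP_plus; [|apply IsP_scal; apply IsP_mono with k; auto].
      apply IsP_scal. apply IsP_plus. apply IsP_scal. apply IsP_mono with (S k); auto. apply IsP_monom.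
      apply IsP_mulx; auto.
    + apply IsP_ext with (fun x => e * (x+1)^k + (gegenbauer lam k x - e * (x + 1) ^ k)).
      intros x. rewrite P_S. ring. apply IsP_plus. apply IsP_scal, IsP_monom. apply IsP_mono with k; auto.
Qed.

Lemma geg_IsP k : IsP (S k) (gegenbauer lam k).
Proof. destruct (geg_lead k) as [[e [He Hr]] _].
  apply IsP_ext with (fun x => e * (x+1)^k + (gegenbauer lam k x - e * (x + 1) ^ k)). intros; ring.
  apply IsP_plus. apply IsP_scal, IsP_monom. apply IsP_mono with k; auto. Qed.

Definition Sg (n : nat) (v : nat -> R) (x : R) : R := sm (fun k => v k * gegenbauer lam k x) n.
Definition supp (n : nat) (v : nat -> R) : Prop := forall k, (n <= k)%nat -> v k = 0.

Lemma Sg_IsP n v : IsP n (Sg n v).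
Proof. unfold Sg. apply IsP_sm. intros i Hi. apply IsP_scal. apply IsP_mono with (S i). lia. apply geg_IsP. Qed.

Lemma span n F : IsP n F -> exists z, supp n z /\ forall x, F x = Sg n z x.
Proof.
  revert F. induction n; intros F [w Hw].
  - exists (fun _ => 0). split. intros k _; auto. intros x. rewrite Hw. reflexivity.
  - destruct (geg_lead n) as [[e [He Hr]] _].
    destruct (IHn (fun x => sm (fun i => w i * (x + 1) ^ i) n - (w n / e) * (gegenbauer lam n x - e * (x + 1) ^ n))) as [z [Hz1 Hz2]].
    { apply IsP_ext with (fun x => sm (fun i => w i * (x + 1) ^ i) n + (- (w n / e)) * (gegenbauer lam n x - e * (x + 1) ^ n)).
      intros; ring. apply IsP_plus. exists w; auto. apply IsP_scal; auto. }
    exists (fun k => if Nat.eqb k n then w n / e else z k). split.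
    + intros k Hk. destruct (Nat.eqb_spec k n). lia. apply Hz1. lia.
    + intros x. rewrite Hw. unfold Sg. simpl. rewrite Nat.eqb_refl.
      rewrite (sm_ext (fun k => (if k =? n then w n / e else z k) * gegenbauer lam k x) (fun k => z k * gegenbauer lam k x)).
      2: { intros i Hi. destruct (Nat.eqb_spec i n). lia. auto. }
      fold (Sg n z x). rewrite <- Hz2. field. auto.
Qed.


Lemma top_zero n c G : IsP n G -> (forall x, -1 <= x <= 1 -> c * (x + 1) ^ n + G x = 0) -> c = 0.
Proof.
  intros [wb Hw] H.
  assert (Hz := pow_zero (S n) (fun i => if Nat.eqb i n then c else wb i)).
  assert (Ec : c = (fun i => if Nat.eqb i n then c else wb i) n) by (rewrite Nat.eqb_refl; auto).
  rewrite Ec. apply Hz; [|lia].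
  intros s Hs. specialize (H (s - 1) ltac:(lra)). rewrite Hw in H.
  replace (s - 1 + 1) with s in H by ring. simpl. rewrite Nat.eqb_refl.
  rewrite (sm_ext _ (fun i => wb i * s ^ i)). lra.
  intros i Hi. destruct (Nat.eqb_spec i n). lia. auto.
Qed.

Lemma lin_indep n v : (forall y, -1 <= y <= 1 -> Sg n v y = 0) -> forall k, (k < n)%nat -> v k = 0.
Proof.
  induction n; intros H k Hk. lia.
  destruct (geg_lead n) as [[e [He Hr]] _].
  assert (Hn : v n = 0).
  { assert (v n * e = 0).
    { apply (top_zero n _ (fun x => Sg n v x + v n * (gegenbauer lam n x - e * (x + 1) ^ n))).
      apply IsP_plus. apply Sg_IsP. apply IsP_scal; auto.
      intros x Hx. rewrite <- (H x Hx). unfold Sg. simpl. ring. }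
    apply Rmult_integral in H0 as [H0|H0]; auto. contradiction. }
  destruct (Nat.eq_dec k n) as [->|Hkn]; auto.
  apply IHn; [|lia]. intros y Hy. rewrite <- (H y Hy). unfold Sg. simpl. rewrite Hn. ring.
Qed.

End Lam.

Section Lam2.
Variable lam : R.
Hypothesis Hl1 : -1/2 < lam.
Hypothesis Hl2 : lam <> 0.

Definition Aop (u : nat -> R) (k : nat) : R :=
  (match k with O => 0 | S j => u j / (2 * (INR j + lam)) end) - u (S k) / (2 * (INR (S k) + lam)).
Fixpoint Apow (j : nat) (u : nat -> R) : nat -> R :=
  match j with O => u | S i => Aop (Apow i u) end.

Lemma Apow_comm j u : Apow j (Aop u) = Aop (Apow j u).
Proof. induction j; simpl; auto. rewrite IHj; auto. Qed.

Lemma supp_A n u : supp n u -> supp (S n) (Aop u).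
Proof. intros H k Hk. unfold Aop. destruct k. lia. rewrite H by lia. rewrite (H (S (S k))) by lia. unfold Rdiv; ring. Qed.

Lemma supp_Apow n u j : supp n u -> supp (n + j) (Apow j u).
Proof. intros H. induction j; simpl. rewrite Nat.add_0_r; auto. rewrite Nat.add_succ_r. apply supp_A; auto. Qed.

Lemma Sg_supp n m v x : supp n v -> (n <= m)%nat -> Sg lam m v x = Sg lam n v x.
Proof. intros H Hnm. unfold Sg. apply sm_ext_supp; auto. intros i H1 H2. rewrite H by auto. ring. Qed.

Lemma Sg_derive n v x : is_derive (Sg lam n v) x (sm (fun k => v k * Dg lam k x) n).
Proof.
  induction n.
  - unfold Sg; simpl. eapply is_derive_ext. 2: apply (is_derive_const 0 x). intros; reflexivity.
  - eapply is_derive_ext with (f := fun t => Sg lam n v t + v n * gegenbauer lam n t).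
    { intros t. reflexivity. }
    destruct (geg_derive lam n x) as [H1 _].
    auto_derive.
    + split. eexists; eauto. split; auto. eexists; eauto.
    + replace (Derive (fun x : R => gegenbauer lam n x) x) with (Dg lam n x) by (symmetry; apply is_derive_unique; exact H1).
      replace (Derive (fun x0 : R => Sg lam n v x0) x) with (sm (fun k => v k * Dg lam k x) n) by (symmetry; apply is_derive_unique; exact IHn).
      simpl. ring.
Qed.

Lemma Sg_exd n v x : ex_derive (Sg lam n v) x.
Proof. eexists. apply Sg_derive. Qed.

Lemma A_deriv_sum L u y : supp L u ->
  sm (fun k => Aop u k * Dg lam k y) (S (S L)) = Sg lam L u y.
Proof.
  intros HL. unfold Aop.
  rewrite (sm_ext _ (fun k => (match k with O => 0 | S j => u j / (2 * (INR j + lam)) end) * Dg lam k y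
                      - u (S k) / (2 * (INR (S k) + lam)) * Dg lam k y)) by (intros; ring).
  rewrite sm_minus. rewrite sm_shift. simpl (match 0%nat with O => _ | S j => _ end).
  rewrite Rmult_0_l, Rplus_0_l.
  assert (E1 : sm (fun i => u i / (2 * (INR i + lam)) * Dg lam (S i) y) (S L) =
               sm (fun i => u i / (2 * (INR i + lam)) * Dg lam (S i) y) L).
  { simpl. rewrite (HL L) by lia. unfold Rdiv; ring. }
  rewrite E1.
  assert (E2 : sm (fun k => u (S k) / (2 * (INR (S k) + lam)) * Dg lam k y) (S (S L)) =
               sm (fun k => u (S k) / (2 * (INR (S k) + lam)) * Dg lam k y) L).
  { simpl. rewrite (HL (S L)) by lia. rewrite (HL (S (S L))) by lia. unfold Rdiv; ring. }
  rewrite E2.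
  unfold Sg.
  rewrite (sm_ext (fun k => u k * gegenbauer lam k y)
     (fun k => u k / (2 * (INR k + lam)) * Dg lam (S k) y - u k / (2 * (INR k + lam)) * Dpg lam k y)).
  2: { intros i Hi. pose proof (geg_dstep lam i y). pose proof (nzl lam Hl1 Hl2 i).
       replace (gegenbauer lam i y) with ((Dg lam (S i) y - Dpg lam i y) / (2 * (INR i + lam))).
       field; auto. rewrite H. field; auto. }
  rewrite sm_minus. f_equal.
  destruct L. reflexivity.
  rewrite (sm_shift (fun k => u k / (2 * (INR k + lam)) * Dpg lam k y)).
  replace (Dpg lam 0 y) with 0 by reflexivity.
  cbn [sm]. rewrite (HL (S L)) by lia. 
  transitivity (sm (fun k : nat => u (S k) / (2 * (INR (S k) + lam)) * Dg lam k y) L). unfold Rdiv; ring.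
  transitivity (sm (fun i : nat => u (S i) / (2 * (INR (S i) + lam)) * Dpg lam (S i) y) L). reflexivity. ring.
Qed.

Lemma A_deriv L u y : supp L u -> is_derive (Sg lam (S L) (Aop u)) y (Sg lam L u y).
Proof.
  intros HL. apply is_derive_ext with (f := Sg lam (S (S L)) (Aop u)). intros t. apply (Sg_supp (S L) (S (S L))). apply supp_A; auto. lia.
  rewrite <- A_deriv_sum by auto. apply Sg_derive.
Qed.

End Lam2.

Section Lam3.
Variable lam : R.
Hypothesis Hl1 : -1/2 < lam.
Hypothesis Hl2 : lam <> 0.

Lemma is_RInt_eqv (f : R -> R) a b l l' : is_RInt f a b l -> l = l' -> is_RInt f a b l'.
Proof. intros H ->; auto. Qed.

Lemma Hlem i : forall L u, supp L u -> exists Q, IsP (S i) Q /\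
  forall y, is_RInt (fun t => (y - t) ^ i * Sg lam L u t) (-1) y
    (INR (fact i) * Sg lam (L + S i) (Apow lam (S i) u) y + Q y).
Proof.
  induction i; intros L u HL.
  - exists (fun _ => - Sg lam (S L) (Aop lam u) (-1)). split. apply IsP_const.
    intros y.
    eapply is_RInt_eqv. eapply is_RInt_ext. 2: eapply (@is_RInt_derive R_CompleteNormedModule) with (f := Sg lam (S L) (Aop lam u)) (df := Sg lam L u).
    + intros t _. simpl. rewrite Rmult_1_l. reflexivity.
    + intros t _. exact (A_deriv lam Hl1 Hl2 L u t HL).
    + intros t _. apply (@ex_derive_continuous R_AbsRing R_NormedModule). apply Sg_exd.
    + simpl. rewrite Nat.add_1_r. unfold minus, plus, opp; simpl. ring.
  - set (G := Sg lam (S L) (Aop lam u)).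
    destruct (IHi (S L) (Aop lam u) (supp_A lam L u HL)) as [Q' [HQ' HI]].
    exists (fun y => INR (S i) * Q' y + (- G (-1)) * (y + 1) ^ (S i)). split.
    { apply IsP_plus. apply IsP_scal. apply IsP_mono with (S i); auto. apply IsP_scal. apply IsP_monom. }
    intros y.
    assert (Hd : is_RInt (fun t => - INR (S i) * (y - t) ^ i * G t + (y - t) ^ S i * Sg lam L u t) (-1) y
                   ((y - y) ^ S i * G y - (y - -1) ^ S i * G (-1))).
    { eapply is_RInt_eqv. eapply (@is_RInt_derive R_CompleteNormedModule) with (f := fun t => (y - t) ^ S i * G t)
        (df := fun t => - INR (S i) * (y - t) ^ i * G t + (y - t) ^ S i * Sg lam L u t).
      - intros t _. pose proof (A_deriv lam Hl1 Hl2 L u t HL) as Hg. fold G in Hg.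
        eapply is_derive_ext. intros; reflexivity.
        auto_derive.
        + eexists; eauto.
        + replace (Derive (fun x : R => G x) t) with (Sg lam L u t) by (symmetry; apply is_derive_unique; exact Hg).
          change (match i with 0%nat => 1 | S _ => INR i + 1 end) with (INR (S i)). match goal with |- ?a = ?b => change (@eq R a b) end. rewrite S_INR. cbn [pow]. replace (y + - t) with (y - t) by ring. set (p := (y - t) ^ i). ring.
      - intros t _. apply (@ex_derive_continuous R_AbsRing R_NormedModule).
        auto_derive. split. apply Sg_exd. split; auto. apply Sg_exd.
      - reflexivity. }
    specialize (HI y).
    assert (H2 := is_RInt_plus _ _ _ _ _ _ Hd (is_RInt_scal _ _ _ (INR (S i)) _ HI)).
    eapply is_RInt_ext. 2: eapply is_RInt_eqv; [exact H2|].
    + intros t _. unfold plus, scal; simpl. unfold mult; simpl. fold G. ring.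
    + rewrite Apow_comm. replace (S L + S i)%nat with (L + S (S i))%nat by lia.
      unfold plus, scal; simpl. unfold mult; simpl.
      replace (y - y) with 0 by ring. replace (y - -1) with (y + 1) by ring.
      change (match i with 0%nat => 1 | S _ => INR i + 1 end) with (INR (S i)). rewrite plus_INR, mult_INR, S_INR. fold G. set (p := (y + 1) ^ i). set (q := 0 ^ i). ring.
Qed.

End Lam3.

Definition ev (n : nat) : nat -> R := fun j => if Nat.eqb j n then 1 else 0.
Definition evp (n : nat) : nat -> R := match n with O => fun _ => 0 | S n' => ev n' end.

Section Lam4.
Variable lam : R.
Hypothesis Hl1 : -1/2 < lam.
Hypothesis Hl2 : lam <> 0.

Lemma Apow_lin j : forall u v al be k,
  Apow lam j (fun m => al * u m + be * v m) k = al * Apow lam j u k + be * Apow lam j v k.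
Proof.
  induction j; intros u v al be k; simpl; auto.
  unfold Aop. destruct k; rewrite !IHj; unfold Rdiv; ring.
Qed.

Lemma nzS n : INR n + 1 + lam <> 0.
Proof. rewrite <- S_INR. apply nzl; auto. Qed.
Lemma nzSS n : INR n + 1 + 1 + lam <> 0.
Proof. rewrite <- !S_INR. apply nzl; auto. Qed.
Lemma nz0 : 0 + lam <> 0.
Proof. rewrite Rplus_0_l. auto. Qed.

Lemma Aop_ev n : Aop lam (ev n) = fun m => (/ (2 * (INR n + lam))) * ev (S n) m + (- / (2 * (INR n + lam))) * evp n m.
Proof.
  apply functional_extensionality. intros m.
  pose proof (nzl lam Hl1 Hl2) as Hz.
  unfold Aop.
  destruct m; destruct n; cbv beta iota delta [evp]; unfold ev;
  repeat match goal with |- context [Nat.eqb ?a ?b] => destruct (Nat.eqb_spec a b) end;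
  subst; try lia; rewrite ?S_INR; simpl INR; field; repeat split; auto using nzS, nzSS, nz0. all: intro HH; try (pose proof (pos_INR n)); lra.
Qed.

Lemma Apow_zero j : forall k, Apow lam j (fun _ => 0) k = 0.
Proof. induction j; intros k; simpl; auto. unfold Aop. destruct k; rewrite !IHj; unfold Rdiv; ring. Qed.

Lemma R2 j k n : Apow lam (S j) (ev n) k =
  Apow lam j (ev (S n)) k / (2 * (INR n + lam)) - (match n with O => 0 | S n' => Apow lam j (ev n') k end) / (2 * (INR n + lam)).
Proof.
  change (Apow lam (S j) (ev n)) with (Aop lam (Apow lam j (ev n))).
  rewrite <- Apow_comm, Aop_ev, Apow_lin.
  destruct n; cbv beta iota delta [evp]; [rewrite Apow_zero|]; unfold Rdiv; ring.
Qed.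

Definition Wt (n : nat) : R := (-1) ^ n * (INR n + lam).

Lemma symA j : forall k n, Apow lam j (ev n) k * Wt n = Apow lam j (ev k) n * Wt k.
Proof.
  induction j; intros k n.
  - simpl. unfold ev. destruct (Nat.eqb_spec k n), (Nat.eqb_spec n k); subst; try lia; ring.
  - rewrite R2. change (Apow lam (S j) (ev k) n) with (Aop lam (Apow lam j (ev k)) n). unfold Aop.
    pose proof (nzl lam Hl1 Hl2) as Hz.
    destruct n as [|n'].
    + pose proof (IHj k 1%nat) as I1.
      set (X1 := Apow lam j (ev 1) k) in *. set (Y1 := Apow lam j (ev k) 1) in *.
      replace ((0 - Y1 / (2 * (INR 1 + lam))) * Wt k) with (- (Y1 * Wt k) / (2 * (INR 1 + lam))) by (field; apply Hz).
      rewrite <- I1. unfold Wt. simpl. field. split; auto. intro; lra.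
    + pose proof (IHj k (S (S n'))) as I1. pose proof (IHj k n') as I2.
      set (X1 := Apow lam j (ev (S (S n'))) k) in *. set (Y1 := Apow lam j (ev k) (S (S n'))) in *.
      set (X2 := Apow lam j (ev n') k) in *. set (Y2 := Apow lam j (ev k) n') in *.
      replace ((Y2 / (2 * (INR n' + lam)) - Y1 / (2 * (INR (S (S n')) + lam))) * Wt k)
        with ((Y2 * Wt k) / (2 * (INR n' + lam)) - (Y1 * Wt k) / (2 * (INR (S (S n')) + lam))) by (field; split; apply Hz).
      rewrite <- I1, <- I2. unfold Wt. rewrite <- !tech_pow_Rmult. rewrite !S_INR.
      set (s := (-1) ^ n'). field. split; [|split]; auto using nzS, nzSS.
Qed.
End Lam4.

Lemma sm_scal_r f n c : sm f n * c = sm (fun i => f i * c) n.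
Proof. induction n; simpl; [ring|]. rewrite <- IHn. ring. Qed.

Lemma supp_ev m : supp (S m) (ev m).
Proof. intros k Hk. unfold ev. destruct (Nat.eqb_spec k m); [lia|reflexivity]. Qed.

Lemma Sg_ev lam m t : Sg lam (S m) (ev m) t = gegenbauer lam m t.
Proof. unfold Sg. simpl. rewrite sm_zero. unfold ev. rewrite Nat.eqb_refl. ring.
  intros i Hi. unfold ev. destruct (Nat.eqb_spec i m); [lia|ring]. Qed.

Section Main.
Variable lam : R.
Hypothesis Hl1 : -1/2 < lam.
Hypothesis Hl2 : lam <> 0.
Variables (M N : nat) (a : nat -> R) (Rc : nat -> nat -> R).
Hypothesis Hyp : forall (n : nat) (y : R), (n <= N)%nat -> -1 <= y <= 1 ->
     RInt (fun t => fM lam M a (y - 1 - t) * gegenbauer lam n t) (-1) y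
     = sum_f_R0 (fun k => Rc k n * gegenbauer lam k y) (M + N + 1).
Variable w : nat -> R.
Hypothesis Hw : forall x, fM lam M a x = sm (fun i => w i * (x + 1) ^ i) (S M).

Lemma coef m : (m <= N)%nat -> forall j, (M + 1 <= j)%nat -> (j < M + N + 2)%nat ->
  Rc j m = sm (fun i => w i * INR (fact i) * Apow lam (S i) (ev m) j) (S M).
Proof.
  intros Hm.
  set (B := (M + N + 2)%nat).
  assert (Cl : forall p, (p <= S M)%nat -> exists Q, IsP (S M) Q /\ forall y,
    is_RInt (fun t => sm (fun i => w i * ((y - t) ^ i * Sg lam (S m) (ev m) t)) p) (-1) y
      (sm (fun i => w i * (INR (fact i) * Sg lam B (Apow lam (S i) (ev m)) y)) p + Q y)).
  { induction p; intros Hp.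
    - exists (fun _ => 0). split. apply IsP_zero. intros y.
      eapply is_RInt_eqv. eapply is_RInt_ext. 2: apply (@is_RInt_const R_NormedModule (-1) y 0).
      intros; reflexivity. unfold scal; simpl; unfold mult; simpl. ring.
    - destruct (IHp ltac:(lia)) as [Q1 [HQ1 HI1]].
      destruct (Hlem lam Hl1 Hl2 p (S m) (ev m) (supp_ev m)) as [Q2 [HQ2 HI2]].
      exists (fun y => Q1 y + w p * Q2 y). split.
      { apply IsP_plus; auto. apply IsP_scal. apply IsP_mono with (S p); auto. }
      intros y.
      assert (H2 := is_RInt_plus _ _ _ _ _ _ (HI1 y) (is_RInt_scal _ _ _ (w p) _ (HI2 y))).
      eapply is_RInt_eqv. eapply is_RInt_ext. 2: exact H2.
      + intros t _. unfold plus, scal; simpl; unfold mult; simpl. reflexivity.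
      + rewrite <- (Sg_supp lam (S m + S p) B (Apow lam (S p) (ev m)) y).
        2: apply supp_Apow, supp_ev. 2: unfold B; lia.
        unfold plus, scal; simpl; unfold mult; simpl. ring. }
  destruct (Cl (S M) (le_n _)) as [Q [HQ HI]].
  destruct (span lam Hl1 Hl2 (S M) Q HQ) as [z [Hz1 Hz2]].
  set (V := fun k => sm (fun i => w i * INR (fact i) * Apow lam (S i) (ev m) k) (S M)).
  assert (HV : forall y, sm (fun i => w i * (INR (fact i) * Sg lam B (Apow lam (S i) (ev m)) y)) (S M) = Sg lam B V y).
  { intros y. unfold Sg, V.
    rewrite (sm_ext (fun k => sm (fun i => w i * INR (fact i) * Apow lam (S i) (ev m) k) (S M) * gegenbauer lam k y)
                    (fun k => sm (fun i => w i * INR (fact i) * Apow lam (S i) (ev m) k * gegenbauer lam k y) (S M)))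
      by (intros; apply sm_scal_r).
    rewrite <- sm_exch. apply sm_ext. intros i _.
    rewrite <- !sm_scal. apply sm_ext. intros; ring. }
  assert (HZ : forall y, -1 <= y <= 1 -> Sg lam B (fun k => Rc k m - V k - z k) y = 0).
  { intros y Hy. specialize (Hyp m y Hm Hy).
    assert (Eq : forall t, Rmin (-1) y < t < Rmax (-1) y ->
      sm (fun i => w i * ((y - t) ^ i * Sg lam (S m) (ev m) t)) (S M) = fM lam M a (y - 1 - t) * gegenbauer lam m t).
    { intros t _. rewrite Sg_ev, Hw. replace (y - 1 - t + 1) with (y - t) by ring.
      rewrite sm_scal_r. apply sm_ext. intros i _. rewrite Rmult_assoc. reflexivity. }
    rewrite (is_RInt_unique _ _ _ _ (is_RInt_ext _ (fun t => fM lam M a (y - 1 - t) * gegenbauer lam m t) _ _ _ Eq (HI y))) in Hyp.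
    rewrite sum_f_R0_sm in Hyp. replace (S (M + N + 1)) with B in Hyp by (unfold B; lia).
    rewrite HV, Hz2, <- (Sg_supp lam (S M) B z y Hz1) in Hyp by (unfold B; lia).
    unfold Sg in *. rewrite (sm_ext _ (fun k => Rc k m * gegenbauer lam k y - V k * gegenbauer lam k y - z k * gegenbauer lam k y)) by (intros; ring).
    rewrite !sm_minus. lra. }
  intros j Hj1 Hj2.
  pose proof (lin_indep lam Hl1 Hl2 B _ HZ j Hj2) as Hj. simpl in Hj.
  rewrite (Hz1 j) in Hj by lia. unfold V in Hj. lra.
Qed.
End Main.

Theorem theorem4p4 (lam : R) (M N : nat) (a : nat -> R) (Rc : nat -> nat -> R) :
  -1/2 < lam -> lam <> 0 ->
  (forall (n : nat) (y : R), (n <= N)%nat -> -1 <= y <= 1 ->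
     RInt (fun t => fM lam M a (y - 1 - t) * gegenbauer lam n t) (-1) y
     = sum_f_R0 (fun k => Rc k n * gegenbauer lam k y) (M + N + 1)) ->
  forall k n : nat, (M + 1 <= k)%nat -> (k <= N)%nat ->
    (M + 1 <= n)%nat -> (n <= N)%nat ->
    Rc k n = (-1) ^ (k + n) * ((INR k + lam) / (INR n + lam)) * Rc n k.
Proof.
  intros Hl1 Hl2 Hyp k n Hk1 Hk2 Hn1 Hn2.
  destruct (Sg_IsP lam Hl1 Hl2 (S M) a) as [w Hw].
  assert (Hw' : forall x, fM lam M a x = sm (fun i => w i * (x + 1) ^ i) (S M)).
  { intros x. rewrite <- Hw. unfold fM, Sg. apply sum_f_R0_sm. }
  assert (E1 := coef lam Hl1 Hl2 M N a Rc Hyp w Hw' n Hn2 k Hk1 ltac:(lia)).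
  assert (E2 := coef lam Hl1 Hl2 M N a Rc Hyp w Hw' k Hk2 n Hn1 ltac:(lia)).
  assert (E : Rc k n * Wt lam n = Rc n k * Wt lam k).
  { rewrite E1, E2, !sm_scal_r. apply sm_ext. intros i _.
    rewrite !Rmult_assoc, symA; auto. }
  unfold Wt in E. rewrite pow_add.
  pose proof (nzl lam Hl1 Hl2 n) as Hn. pose proof (nzl lam Hl1 Hl2 k) as Hk.
  assert (Hs : (-1) ^ n * (-1) ^ n = 1).
  { rewrite <- pow_add. replace (n + n)%nat with (2 * n)%nat by lia. rewrite pow_mult. simpl. rewrite Rmult_1_r.
    replace (-1 * -1) with 1 by ring. apply pow1. }
  set (s := (-1) ^ n) in *. set (t := (-1) ^ k) in *.
  apply Rmult_eq_reg_r with (s * (INR n + lam)).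
  2: { intro H0. apply Rmult_integral in H0 as [H0|H0]; [rewrite H0 in Hs; lra|auto]. }
  rewrite E. rewrite <- (Rmult_1_r (Rc n k * (t * (INR k + lam)))) at 1. rewrite <- Hs. field. auto.
Qed.
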